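(* Let $G$ be a DAG with $n$ nodes and $k,r,g,L$ positive integers. Suppose that every SPP pebbling strategy of $G$ with fast memory of size $k\cdot r$ uses at least $L$ I/O operations. Then every MPP pebbling strategy of $G$ with $k$ processors, fast memory size $r$ each, and I/O cost $g$ has cost at least $g\cdot L/k+n/k$.
   Context: Single-processor red-blue pebbling (SPP) with fast memory size $r$ on a DAG $G=(V,E)$: a state is a pair $(R,B)$ of subsets of $V$ (red and blue pebbles), starting with both empty. Rules: (R1-S) place a red pebble on a node carrying a blue pebble; (R2-S) place a blue pebble on a node carrying a red pebble; (R3-S) place a red pebble on a node all of whose in-neighbors carry red pebbles (in particular on any source); (R4-S) remove any pebble. At all times $|R|\le r$; a strategy must end in a state where every sink carries a pebble. Its I/O cost is the number of applications of (R1-S) and (R2-S). Multiprocessor red-blue pebbling (MPP). Input: a DAG $G=(V,E)$ with $n=|V|$ and positive integers $k$ (number of processors), $r$ (fast-memory size per processor), $g$ (cost of an I/O step). $\Delta_{in}$ denotes the maximum in-degree of $G$; sources/sinks are nodes of in-degree/out-degree $0$. A configuration is a tuple $(R^1,\dots,R^k,B)$ of subsets of $V$ ($R^j$ = nodes carrying a red pebble of processor $j$, $B$ = nodes carrying a blue pebble); it is valid if $|R^j|\le r$ for all $j$. The initial configuration has all sets empty; a configuration is terminal if every sink lies in $B\cup\bigcup_j R^j$. The transition rules are: (R1) for some $m\le k$, pairwise distinct processors $j_1,\dots,j_m$ and nodes $v_1,\dots,v_m$ with $v_i\in R^{j_i}$, add each $v_i$ to $B$ (cost $g$); (R2) for some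 $m\le k$, pairwise distinct processors $j_1,\dots,j_m$ and nodes $v_1,\dots,v_m\in B$, add each $v_i$ to $R^{j_i}$ (cost $g$); (R3) for some $m\le k$, pairwise distinct processors $j_1,\dots,j_m$ and nodes $v_1,\dots,v_m$ such that every in-neighbor of $v_i$ lies in $R^{j_i}$, add each $v_i$ to $R^{j_i}$ (cost $1$); (R4) remove a single red or blue pebble (cost $0$). A pebbling strategy is a sequence of valid configurations starting at the initial configuration and ending at a terminal one, each obtained from its predecessor by one rule; its cost is the sum of the costs of the rules applied. $\mathrm{OPT}$ denotes the minimum cost of a pebbling strategy. Applications of (R1),(R2) are called I/O steps and applications of (R3) compute steps. *)

(* Defs.v *)
From mathcomp Require Import all_boot all_order all_algebra.
Set Implicit Arguments. Unset Strict Implicit. Unset Printing Implicit Defensive.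

(* A directed graph on a finite node type V, given by an edge relation:
   [e u v] means there is an edge u -> v (u is an in-neighbour of v). *)
Section Pebbling.
Variable V : finType.
Variable e : rel V.

Definition is_dag : Prop :=
  forall (x : V) (p : seq V), path e x p -> p != [::] -> last x p != x.

Definition is_sink (v : V) : bool := [forall w, ~~ e v w].

Definition in_nbrs_in (v : V) (S : {set V}) : bool := [forall u, e u v ==> (u \in S)].

Inductive spp_move : Type :=
| SLoad of V
| SStore of V
| SCompute of V
| SRemRed of V
| SRemBlue of V.

Definition spp_apply (s : {set V} * {set V}) (m : spp_move)
  : option ({set V} * {set V}) :=
  let: (R, B) := s in
  match m with
  | SLoad v => if v \in B then Some (v |: R, B) else None
  | SStore v => if v \in R then Some (R, v |: B) else None
  | SCompute v => if in_nbrs_in v R then Some (v |: R, B) else None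
  | SRemRed v => if v \in R then Some (R :\ v, B) else None
  | SRemBlue v => if v \in B then Some (R, B :\ v) else None
  end.

Fixpoint spp_run (r : nat) (s : {set V} * {set V}) (ms : seq spp_move)
  : option ({set V} * {set V}) :=
  match ms with
  | [::] => Some s
  | m :: ms' =>
      match spp_apply s m with
      | Some s' => if #|s'.1| <= r then spp_run r s' ms' else None
      | None => None
      end
  end.

Definition spp_terminal (s : {set V} * {set V}) : bool :=
  [forall v, is_sink v ==> (v \in s.1 :|: s.2)].

Definition spp_strategy (r : nat) (ms : seq spp_move) : bool :=
  if spp_run r (set0, set0) ms is Some s then spp_terminal s else false.

Definition spp_is_io (m : spp_move) : bool :=
  match m with SLoad _ | SStore _ => true | _ => false end.

Definition spp_io (ms : seq spp_move) : nat := count spp_is_io ms.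

Variable k : nat.

(* A parallel rule application is a list of (processor, node) pairs with
   pairwise distinct processors (so m <= k automatically). *)
Inductive mpp_move : Type :=
| MStore of seq ('I_k * V)
| MLoad of seq ('I_k * V)
| MCompute of seq ('I_k * V)
| MRemRed of 'I_k & V
| MRemBlue of V.

Definition mpp_state : Type := ({ffun 'I_k -> {set V}} * {set V})%type.

Definition add_reds (R : {ffun 'I_k -> {set V}}) (ps : seq ('I_k * V))
  : {ffun 'I_k -> {set V}} :=
  [ffun j => R j :|: [set x in [seq p.2 | p <- ps & p.1 == j]]].

Definition mpp_apply (s : mpp_state) (m : mpp_move) : option mpp_state :=
  let: (R, B) := s in
  match m with
  | MStore ps =>
      if uniq [seq p.1 | p <- ps] && all (fun p => p.2 \in R p.1) ps
      then Some (R, B :|: [set x in [seq p.2 | p <- ps]]) else None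
  | MLoad ps =>
      if uniq [seq p.1 | p <- ps] && all (fun p => p.2 \in B) ps
      then Some (add_reds R ps, B) else None
  | MCompute ps =>
      if uniq [seq p.1 | p <- ps] && all (fun p => in_nbrs_in p.2 (R p.1)) ps
      then Some (add_reds R ps, B) else None
  | MRemRed j v =>
      if v \in R j then Some ([ffun i => if i == j then R i :\ v else R i], B)
      else None
  | MRemBlue v => if v \in B then Some (R, B :\ v) else None
  end.

Definition mpp_valid (r : nat) (s : mpp_state) : bool := [forall j, #|s.1 j| <= r].

Fixpoint mpp_run (r : nat) (s : mpp_state) (ms : seq mpp_move) : option mpp_state :=
  match ms with
  | [::] => Some s
  | m :: ms' =>
      match mpp_apply s m with
      | Some s' => if mpp_valid r s' then mpp_run r s' ms' else None
      | None => None
      end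
  end.

Definition mpp_init : mpp_state := ([ffun => set0], set0).

Definition mpp_terminal (s : mpp_state) : bool :=
  [forall v, is_sink v ==> ((v \in s.2) || [exists j, v \in s.1 j])].

Definition mpp_strategy (r : nat) (ms : seq mpp_move) : bool :=
  if mpp_run r mpp_init ms is Some s then mpp_terminal s else false.

Definition mpp_move_cost (g : nat) (m : mpp_move) : nat :=
  match m with
  | MStore _ | MLoad _ => g
  | MCompute _ => 1
  | _ => 0
  end.

Definition mpp_cost (g : nat) (ms : seq mpp_move) : nat :=
  \sum_(m <- ms) mpp_move_cost g m.

End Pebbling.

(* Main.v *)
Require Import Defs.
From mathcomp Require Import all_boot all_order all_algebra.
From mathcomp Require Import zify.
Import GRing.Theory Num.Theory.
Set Implicit Arguments. Unset Strict Implicit.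

Section Aux.
Variable V : finType.
Variable e : rel V.

Lemma all_in_closed (C : {set V}) : is_dag e ->
  (forall v, is_sink e v -> v \in C) ->
  (forall u v, e u v -> v \in C -> u \in C) -> forall v, v \in C.
Proof.
move=> dag hs hc v; apply/negPn/negP => vC.
pose f x := if [pick w | e x w && (w \notin C)] is Some w then w else x.
have hf : forall x, x \notin C -> e x (f x) && (f x \notin C).
  move=> x xC; rewrite /f; case: pickP => [w -> //|H].
  have : ~~ is_sink e x by apply: contra xC; apply: hs.
  move=> /forallPn [w]; rewrite negbK => exw.
  have := H w; rewrite exw /= => /negbFE wC.
  by move: xC; rewrite (hc _ _ exw wC).
have hit : forall n, iter n f v \notin C.
  by elim=> [//|n IH] /=; case/andP: (hf _ IH).
have hp : forall n x, x \notin C -> path e x (traject f (f x) n).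
  elim=> [//|n IH] x xC /=; case/andP: (hf _ xC) => -> fxC; exact: IH.
have : ~~ uniq (traject f v #|V|.+1).
  apply/negP => /card_uniqP; rewrite size_traject => H.
  by have := max_card (mem (traject f v #|V|.+1)); rewrite H ltnn.
case/(uniqPn v) => i [j [ij]]; rewrite size_traject => jn.
rewrite !nth_traject // ?(ltn_trans ij) // => eqij.
set x := iter i f v.
have dx : iter (j - i) f x = x.
  by rewrite /x -iterD subnK ?(ltnW ij) // eqij.
have := dag x (traject f (f x) (j - i)) (hp _ _ (hit i)).
rewrite last_traject dx eqxx /=.
have : 0 < j - i by rewrite subn_gt0.
by case: (j - i) => [|d] //= _ /(_ isT).
Qed.
Variable k : nat.

Definition U (R : {ffun 'I_k -> {set V}}) : {set V} := [set x | [exists j, x \in R j]].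

Lemma card_U r (R : {ffun 'I_k -> {set V}}) : (forall j, #|R j| <= r) -> #|U R| <= k * r.
Proof.
move=> hR.
have H : forall s : seq 'I_k, #|[set x | has (fun j => x \in R j) s]| <= size s * r.
  elim=> [|j s IH] /=.
    by rewrite leqn0 cards_eq0; apply/eqP/setP => x; rewrite !inE.
  have -> : [set x | (x \in R j) || has (fun j => x \in R j) s]
            = R j :|: [set x | has (fun j => x \in R j) s].
    by apply/setP => x; rewrite !inE.
  by rewrite mulSn (leq_trans (leq_card_setU _ _)) // leq_add.
have -> : U R = [set x | has (fun j => x \in R j) (enum 'I_k)].
  apply/setP => x; rewrite !inE; apply/existsP/hasP => [[j hj]|[j _ hj]].
    by exists j; rewrite ?mem_enum.
  by exists j.
by have := H (enum 'I_k); rewrite size_enum_ord mulnC.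
Qed.

Lemma run_cat r s a b : spp_run e r s (a ++ b) =
  obind (fun s' => spp_run e r s' b) (spp_run e r s a).
Proof.
elim: a s => [|m a IH] s //=.
case: (spp_apply e s m) => [s'|] //; case: ifP => //.
Qed.

Lemma run_cons r s m ms : spp_run e r s (m :: ms) =
  match spp_apply e s m with
  | Some s' => if #|s'.1| <= r then spp_run e r s' ms else None
  | None => None end.
Proof. by []. Qed.

Lemma run_adds (c : V -> spp_move V) (xs : seq V) r (R B : {set V}) :
  (forall x (R' : {set V}), x \in xs -> R \subset R' -> spp_apply e (R', B) (c x) = Some (x |: R', B)) ->
  #|R :|: [set x in xs]| <= r ->
  spp_run e r (R, B) (map c xs) = Some (R :|: [set x in xs], B).
Proof.
elim: xs R => [|x xs IH] R H hc; first rewrite /=.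
  congr (Some (_, _)); apply/setP => y; rewrite !inE; by case: (y \in R).
rewrite map_cons run_cons.
rewrite H ?mem_head ?subxx //.
have eqS : (x |: R) :|: [set y in xs] = R :|: [set y in x :: xs].
  apply/setP => y; rewrite !inE; by case: (y == x); case: (y \in R).
have -> : #|x |: R| <= r.
  apply: leq_trans hc; apply: subset_leq_card; rewrite -eqS.
  by apply/subsetP => y; rewrite !inE => ->.
rewrite IH ?eqS //.
move=> y R' yxs sR; apply: H; first by rewrite inE yxs orbT.
by apply: subset_trans sR; apply/subsetP => z; rewrite !inE => ->; rewrite orbT.
Qed.

Lemma run_stores (xs : seq V) r (R B : {set V}) : {subset xs <= R} -> #|R| <= r ->
  spp_run e r (R, B) (map (@SStore V) xs) = Some (R, B :|: [set x in xs]).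
Proof.
elim: xs B => [|x xs IH] B sub hc /=.
  congr (Some (_, _)); apply/setP => y; rewrite !inE; by case: (y \in B).
rewrite sub ?mem_head //= hc IH //; last by move=> y yi; apply: sub; rewrite inE yi orbT.
congr (Some (_, _)); apply/setP => y; rewrite !inE; by case: (y == x); case: (y \in B).
Qed.

Lemma U_add R (ps : seq ('I_k * V)) :
  U (add_reds R ps) = U R :|: [set x in [seq p.2 | p <- ps]].
Proof.
apply/setP => y; rewrite !inE; apply/existsP/orP.
  case=> j; rewrite ffunE !inE => /orP [h|h].
    by left; apply/existsP; exists j.
  right; case/mapP: h => p; rewrite mem_filter => /andP [_ pps] ->.
  exact: map_f.
case=> [/existsP [j h]|/mapP [p pps ->]].
  by exists j; rewrite ffunE !inE h.
exists p.1; rewrite ffunE !inE; apply/orP; right.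
by apply: map_f; rewrite mem_filter eqxx.
Qed.

Lemma in_nbrs_mono v (A B : {set V}) : in_nbrs_in e v A -> A \subset B -> in_nbrs_in e v B.
Proof.
move=> /forallP h /subsetP s; apply/forallP => u; apply/implyP => euv.
by apply: s; have := h u; rewrite euv.
Qed.

Lemma size_uniq_k (ps : seq ('I_k * V)) : uniq [seq p.1 | p <- ps] -> size ps <= k.
Proof.
move/card_uniqP; rewrite size_map => <-.
by rewrite -[X in _ <= X]card_ord max_card.
Qed.

Definition tr (s : mpp_state V k) (m : mpp_move V k) : seq (spp_move V) :=
 match m with
 | MStore ps => map (@SStore V) [seq p.2 | p <- ps]
 | MLoad ps => map (@SLoad V) [seq p.2 | p <- ps]
 | MCompute ps => map (@SCompute V) [seq p.2 | p <- ps]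
 | MRemRed j v => if [exists i, (i != j) && (v \in s.1 i)] then [::] else [:: SRemRed v]
 | MRemBlue v => [:: SRemBlue v]
 end.

Fixpoint trrun (s : mpp_state V k) (ms : seq (mpp_move V k)) : seq (spp_move V) :=
  match ms with
  | [::] => [::]
  | m :: ms' => if mpp_apply e s m is Some s' then tr s m ++ trrun s' ms' else [::]
  end.

Definition is_io (m : mpp_move V k) := match m with MStore _ | MLoad _ => true | _ => false end.
Definition is_comp (m : mpp_move V k) := match m with MCompute _ => true | _ => false end.

Lemma step r s m s' : mpp_apply e s m = Some s' -> mpp_valid r s' ->
  spp_run e (k * r) (U s.1, s.2) (tr s m) = Some (U s'.1, s'.2) /\
  spp_io (tr s m) <= k * is_io m.
Proof.
case: s => R B; case: m => [ps|ps|ps|j v|v] /=.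
- case: ifP => // /andP [uq /allP al] [<-] /forallP vs /=.
  rewrite run_stores ?card_U //.
    split=> //; rewrite /spp_io count_map muln1.
    by apply: leq_trans (count_size _ _) _; rewrite size_map; exact: size_uniq_k uq.
  move=> x /mapP [p pps ->]; rewrite inE; apply/existsP; exists p.1; exact: al.
- case: ifP => // /andP [uq /allP al] [<-] /forallP vs /=.
  rewrite run_adds -?U_add ?card_U //.
    split=> //; rewrite /spp_io count_map muln1.
    by apply: leq_trans (count_size _ _) _; rewrite size_map; exact: size_uniq_k uq.
  move=> x R' /mapP [p pps ->] _ /=; by rewrite (al p pps).
- case: ifP => // /andP [uq /allP al] [<-] /forallP vs /=.
  rewrite run_adds -?U_add ?card_U //.
    split=> //; rewrite /spp_io count_map muln0.
    by rewrite (@eq_count _ _ pred0) ?count_pred0.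
  move=> x R' /mapP [p pps ->] sR /=; rewrite (@in_nbrs_mono _ _ R' (al p pps)) //.
  apply: subset_trans sR; apply/subsetP => y yR; rewrite inE; apply/existsP; by exists p.1.
- case: ifP => // vRj [<-] /forallP vs /=.
  case: ifP => [/existsP [i /andP [ij vi]]|nex] /=.
    split=> //; congr (Some (_, _)); apply/setP => y; rewrite !inE.
    apply/existsP/existsP => [[l yl]|[l]].
      case: (eqVneq y v) => [->|yv]; first by exists i; rewrite ffunE (negbTE ij).
      exists l; rewrite ffunE; case: ifP => // _; by rewrite in_setD1 yv yl.
    move=> yl; exists l; move: yl; rewrite ffunE; case: ifP => _ //; by case/setD1P.
  have hU : U [ffun i => if i == j then R i :\ v else R i] = U R :\ v.
    apply/setP => y; rewrite !inE; apply/existsP/andP.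
      case=> l; rewrite ffunE; case: ifP => [_|lj]; rewrite ?inE.
        by case/andP => -> yl; split=> //; apply/existsP; exists l.
      move=> yl; split; last by apply/existsP; exists l.
      apply/negP => /eqP yv; move/negbT: nex => /existsP; apply; exists l.
      by rewrite lj -yv yl.
    case=> yv /existsP [l yl]; exists l; rewrite ffunE; case: ifP => // _.
    by rewrite !inE yv.
  have vU : v \in U R by rewrite inE; apply/existsP; exists j.
  rewrite vU -hU card_U //.
- case: ifP => // vB [<-] /forallP vs /=; split=> //; by rewrite card_U.
Qed.

Lemma sim r s ms t : mpp_run e r s ms = Some t ->
  spp_run e (k * r) (U s.1, s.2) (trrun s ms) = Some (U t.1, t.2) /\
  spp_io (trrun s ms) <= k * count is_io ms.
Proof.
elim: ms s => [|m ms IH] s /=; first by case=> <-.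
case E: (mpp_apply e s m) => [s'|] //; case: ifP => // vs' /IH [h1 h2].
have [a1 a2] := @step r _ _ _ E vs'.
rewrite run_cat a1 /= h1; split=> //.
by rewrite /spp_io count_cat mulnDr leq_add.
Qed.

Definition closedC (C : {set V}) := forall u v, e u v -> v \in C -> u \in C.
Definition covers (C : {set V}) (s : mpp_state V k) := (U s.1 \subset C) && (s.2 \subset C).
Definition cn (m : mpp_move V k) : seq V := if m is MCompute ps then [seq p.2 | p <- ps] else [::].

Lemma setU_nil (C : {set V}) : C :|: [set x in [::]] = C.
Proof. by apply/setP => x; rewrite !inE orbF. Qed.

Lemma comp_step s m s' C : mpp_apply e s m = Some s' -> closedC C -> covers C s ->
  closedC (C :|: [set x in cn m]) /\ covers (C :|: [set x in cn m]) s' /\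
  size (cn m) <= k * is_comp m.
Proof.
case: s => R B; rewrite /covers /= => + cC /andP [/subsetP sU /subsetP sB].
case: m => [ps|ps|ps|j v|v] /=; rewrite ?setU_nil ?muln0.
- case: ifP => // /andP [uq /allP al] [<-] /=; split=> //; split=> //.
  apply/andP; split; first exact/subsetP.
  apply/subsetP => x; rewrite !inE => /orP [/sB //|/mapP [p pps ->]].
  apply: sU; rewrite inE; apply/existsP; exists p.1; exact: al.
- case: ifP => // /andP [uq /allP al] [<-] /=; split=> //; split=> //.
  rewrite U_add; apply/andP; split; last exact/subsetP.
  apply/subsetP => x /setUP [/sU //|]; rewrite inE => /mapP [p pps ->].
  exact: sB (al p pps).
- case: ifP => // /andP [uq /allP al] [<-] /=; split; last split.
  + move=> u v euv; rewrite !inE => /orP [/(cC _ _ euv) -> //|/mapP [p pps vp]].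
    apply/orP; left; apply: sU; rewrite inE; apply/existsP; exists p.1.
    have /forallP := al p pps => /(_ u); rewrite -vp euv; exact.
  + rewrite U_add; apply/andP; split; apply/subsetP => x.
      by move=> /setUP [/sU h|h]; apply/setUP; [left|right].
    by move/sB => h; apply/setUP; left.
  + by rewrite muln1 size_map (@size_uniq_k ps uq).
- case: ifP => // vRj [<-] /=; split=> //; split=> //.
  apply/andP; split; last exact/subsetP.
  apply/subsetP => x; rewrite inE => /existsP [l]; rewrite ffunE.
  move=> h; apply: sU; rewrite inE; apply/existsP; exists l.
  by move: h; case: ifP => // _ /setD1P [].
- case: ifP => // vB [<-] /=; split=> //; split=> //.
  apply/andP; split; first exact/subsetP.
  by apply/subsetP => x /setD1P [_ /sB].
Qed.

Lemma comp_run r s ms t C : mpp_run e r s ms = Some t -> closedC C -> covers C s ->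
  closedC (C :|: [set x in flatten (map cn ms)]) /\
  covers (C :|: [set x in flatten (map cn ms)]) t /\
  size (flatten (map cn ms)) <= k * count is_comp ms.
Proof.
elim: ms s C => [|m ms IH] s C /=; first by case=> <-; rewrite setU_nil.
case E: (mpp_apply e s m) => [s'|] //; case: ifP => // _ hr cC cv.
have [c1 [c2 c3]] := @comp_step _ _ _ _ E cC cv.
have [d1 [d2 d3]] := IH _ _ hr c1 c2.
have eqC : (C :|: [set x in cn m]) :|: [set x in flatten [seq cn i | i <- ms]] =
           C :|: [set x in cn m ++ flatten [seq cn i | i <- ms]].
  by apply/setP => x; rewrite !inE mem_cat orbA.
rewrite -eqC; split=> //; split=> //.
by rewrite size_cat mulnDr leq_add.
Qed.

Lemma cost_eq g (ms : seq (mpp_move V k)) :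
  mpp_cost g ms = g * count is_io ms + count is_comp ms.
Proof.
elim: ms => [|m ms IH]; first by rewrite /mpp_cost big_nil muln0.
rewrite /mpp_cost big_cons -/(mpp_cost g ms) IH /=.
case: m => * /=; rewrite ?mulnDr ?muln1 ?muln0 ?add0n; lia.
Qed.
End Aux.

Theorem corollary6 (V : finType) (e : rel V) (k r g L : nat) :
  is_dag e -> (0 < k)%N -> (0 < r)%N -> (0 < g)%N -> (0 < L)%N ->
  (forall ms : seq (spp_move V), spp_strategy e (k * r) ms -> (L <= spp_io ms)%N) ->
  forall ms : seq (mpp_move V k), mpp_strategy e r ms ->
  ((g * L)%:R / k%:R + #|V|%:R / k%:R <= (mpp_cost g ms)%:R :> rat)%R.
Proof.
move=> dag k0 r0 g0 L0 hL ms; rewrite /mpp_strategy.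
case E: (mpp_run e r (mpp_init V k) ms) => [t|] // term.
have U0 : U (mpp_init V k).1 = set0.
  by apply/setP => x; rewrite !inE; apply/existsP => -[j]; rewrite ffunE inE.
have [h1 h2] := sim E.
have hio : (L <= k * count (@is_io V k) ms)%N.
  apply: leq_trans h2; apply: hL; rewrite /spp_strategy.
  move: h1; rewrite U0 => ->.
  apply/forallP => v; apply/implyP => sv; move/forallP: term => /(_ v).
  rewrite sv /= => /orP [vb|/existsP [j vj]]; rewrite !inE ?vb ?orbT //.
  by apply/orP; left; apply/existsP; exists j.
have cv0 : covers set0 (mpp_init V k) by rewrite /covers U0 /= !sub0set.
have cC0 : closedC e set0 by move=> u v _; rewrite inE.
have [c1 [c2 c3]] := comp_run E cC0 cv0.
set C := (set0 :|: _) in c1 c2.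
have allC : forall v, v \in C.
  apply: (all_in_closed dag) => // v sv.
  move/andP: c2 => [/subsetP sU /subsetP sB].
  move/forallP: term => /(_ v); rewrite sv /= => /orP [/sB //|/existsP [j vj]].
  by apply: sU; rewrite inE; apply/existsP; exists j.
have hn : (#|V| <= k * count (@is_comp V k) ms)%N.
  apply: leq_trans c3; apply: leq_trans (card_size _).
  rewrite -[X in (X <= _)%N]cardsT -(cardsE (mem (flatten _))).
  apply: subset_leq_card; apply/subsetP => v _; have := allC v.
  by rewrite /C !inE.
have hcost : (g * L + #|V| <= k * mpp_cost g ms)%N.
  rewrite cost_eq mulnDr mulnCA; apply: leq_add => //.
  by rewrite leq_mul2l hio orbT.
rewrite -mulrDl ler_pdivrMr ?ltr0n // -!natrD -natrM ler_nat.
by rewrite [_ * k]mulnC.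
Qed.
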